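(* Let $n\neq 0$ be an integer and let $K$ be a bicolored $n$-Eulerian cubical complex. Then the same number of vertices of $K$ are assigned each of the two colors; in particular $K$ has an even number of vertices.
   Context: A cubical poset is a poset $P$ in which every order ideal $\{z\in P: z\le x\}$ is isomorphic to a product of copies of $I$, where $I$ is the three-element face poset of an interval with the empty face excluded. A cubical complex is a (regular) cell complex whose face poset $P$ (excluding the empty face) is a cubical poset such that $P$ with a minimum and maximum adjoined is a lattice. A bicoloring assigns to each vertex one of two colors so that every edge has one endpoint of each color. The link of a vertex $v$ is the poset of faces strictly containing $v$; its Euler characteristic is the alternating sum $\sum_{i\ge 1}(-1)^{i-1}(\text{number of } i\text{-dimensional faces of } K \text{ containing } v)$. The complex $K$ is $n$-Eulerian if the link of every vertex has Euler characteristic $n$. *)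

(* Defs.v *)
(* Cubical complexes are modelled combinatorially by their
   (finite) face poset, as in the paper's definition. *)
From mathcomp Require Import all_boot all_order all_algebra.
Set Implicit Arguments. Unset Strict Implicit. Unset Printing Implicit Defensive.
Import GRing.Theory Num.Theory.

(* The face poset I of an interval (empty face excluded): elements 0, 1
   (the two endpoints) and 2 (the whole segment), with 0 < 2 and 1 < 2. *)
Definition I_le (a b : 'I_3) : bool := (a == b) || (val b == 2).

Definition cube_le (d : nat) (u w : {ffun 'I_d -> 'I_3}) : bool :=
  [forall i, I_le (u i) (w i)].

Definition is_partial_order (T : finType) (le : rel T) : Prop :=
  reflexive le /\ antisymmetric le /\ transitive le.

Definition cubical_poset (T : finType) (le : rel T) : Prop :=
  is_partial_order le /\
  forall x : T, exists (d : nat) (f : {ffun 'I_d -> 'I_3} -> T),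
    [/\ injective f,
        (forall u, le (f u) x),
        (forall z, le z x -> exists u, f u = z) &
        (forall u w, le (f u) (f w) = cube_le u w)].

(* P with a minimum and a maximum adjoined is a lattice: any two elements
   with a common upper (resp. lower) bound in P have a least upper
   (resp. greatest lower) bound in P. *)
Definition hat_lattice (T : finType) (le : rel T) : Prop :=
  forall x y : T,
    ((exists z, le x z /\ le y z) ->
       exists z, [/\ le x z, le y z & forall w, le x w -> le y w -> le z w]) /\
    ((exists z, le z x /\ le z y) ->
       exists z, [/\ le z x, le z y & forall w, le w x -> le w y -> le w z]).

Definition cubical_complex (T : finType) (le : rel T) : Prop :=
  cubical_poset le /\ hat_lattice le.

(* Dimension of a face x: the d with {z <= x} ~ I^d, i.e. #{z <= x} = 3^d. *)
Definition face_dim (T : finType) (le : rel T) (x : T) : nat :=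
  trunc_log 3 #|[pred z | le z x]|.

Definition is_vertex (T : finType) (le : rel T) (v : T) : bool :=
  face_dim le v == 0.

Definition is_edge (T : finType) (le : rel T) (e : T) : bool :=
  face_dim le e == 1.

Definition bicoloring (T : finType) (le : rel T) (c : T -> bool) : Prop :=
  forall e v w : T, is_edge le e -> is_vertex le v -> is_vertex le w ->
    le v e -> le w e -> v != w -> c v != c w.

Definition link_euler (T : finType) (le : rel T) (v : T) : int :=
  (\sum_(y : T | le v y && (y != v)) (-1) ^+ (face_dim le y).-1)%R.

Definition eulerian (T : finType) (le : rel T) (n : int) : Prop :=
  forall v : T, is_vertex le v -> link_euler le v = n.

(* Main.v *)
Require Import Defs.
From mathcomp Require Import all_boot all_order all_algebra.
Set Implicit Arguments. Unset Strict Implicit. Unset Printing Implicit Defensive.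
Import GRing.Theory Num.Theory.

Definition two3 : 'I_3 := Ordinal (isT : 2 < 3).
Definition flip0 (k : 'I_3) : 'I_3 :=
  match val k with 0 => Ordinal (isT : 1 < 3) | 1 => Ordinal (isT : 0 < 3) | _ => k end.

Lemma flip0K : involutive flip0.
Proof. by case=> [[|[|[|m]]] hk] //; apply: val_inj. Qed.

Lemma flip0_2 k : (val (flip0 k) == 2) = (val k == 2).
Proof. by case: k => [[|[|[|m]]] hk]. Qed.

Lemma flip0_neq k : val k != 2 -> flip0 k != k.
Proof. by case: k => [[|[|[|m]]] hk]. Qed.

Definition upd d (u : {ffun 'I_d.+1 -> 'I_3}) (k : 'I_3) : {ffun 'I_d.+1 -> 'I_3} :=
  [ffun i => if i == ord0 then k else u i].

Definition flipu d (u : {ffun 'I_d.+1 -> 'I_3}) := upd u (flip0 (u ord0)).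

Lemma flipuK d : involutive (@flipu d).
Proof.
move=> u; apply/ffunP => i; rewrite /flipu /upd !ffunE eqxx.
by case: (i =P ord0) => [->|//]; rewrite flip0K.
Qed.

Definition nos2 d (u : {ffun 'I_d -> 'I_3}) := [forall i, val (u i) != 2].

Lemma nos2_flip d (u : {ffun 'I_d.+1 -> 'I_3}) : nos2 (flipu u) = nos2 u.
Proof.
rewrite /nos2 /flipu /upd; apply/forallP/forallP => h i; have := h i; rewrite !ffunE;
  case: (i =P ord0) => [->|//]; by rewrite ?flip0_2.
Qed.

Section Cub.
Variables (T : finType) (le : rel T).
Hypothesis Hc : cubical_poset le.

Lemma le_refl' x : le x x. Proof. by case: Hc => [[]]. Qed.
Lemma le_trans' : transitive le. Proof. by case: Hc => [[_ []]]. Qed.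

Lemma card_ideal x d (f : {ffun 'I_d -> 'I_3} -> T) :
  injective f -> (forall u, le (f u) x) -> (forall z, le z x -> exists u, f u = z) ->
  #|[pred z | le z x]| = 3 ^ d.
Proof.
move=> fi fx fs.
have -> : 3 ^ d = #|{ffun 'I_d -> 'I_3}| by rewrite card_ffun !card_ord.
rewrite -(card_image fi); apply: eq_card => z; rewrite inE.
apply/idP/imageP.
- by move=> /fs [u <-]; exists u.
- by case=> u _ ->.
Qed.

Lemma face_dim_spec x d (f : {ffun 'I_d -> 'I_3} -> T) :
  injective f -> (forall u, le (f u) x) -> (forall z, le z x -> exists u, f u = z) ->
  face_dim le x = d.
Proof. by move=> fi fx fs; rewrite /face_dim (card_ideal fi fx fs) trunc_expnK. Qed.

Lemma vertex_min v z : is_vertex le v -> le z v -> z = v.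
Proof.
move=> hv hz; case: Hc => _ /(_ v) [d [f [fi fx fs fle]]].
have hd : d = 0 by rewrite -(face_dim_spec fi fx fs); apply/eqP.
subst d.
have [u1 <-] := fs _ hz; have [u2 <-] := fs _ (le_refl' v).
by congr f; apply/ffunP => -[].
Qed.

Section Face.
Variables (y : T) (d : nat) (f : {ffun 'I_d -> 'I_3} -> T).
Hypotheses (fi : injective f) (fy : forall u, le (f u) y)
  (fs : forall z, le z y -> exists u, f u = z)
  (fle : forall u w, le (f u) (f w) = cube_le u w).

Lemma card_ideal_f a : #|[pred z | le z (f a)]| = #|[pred b | cube_le b a]|.
Proof.
rewrite -(card_image fi); apply: eq_card => z; rewrite inE.
apply/idP/imageP.
- move=> hz; have [b hb] := fs (le_trans' hz (fy a)).
  by exists b; rewrite // inE -fle hb.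
- by case=> b; rewrite inE -fle => h ->.
Qed.

Lemma vertex_f u : nos2 u -> is_vertex le (f u).
Proof.
move=> /forallP hu; rewrite /is_vertex /face_dim card_ideal_f.
have/eq_card-> : [pred b | cube_le b u] =i pred1 u.
  move=> b; rewrite !inE; apply/forallP/eqP => [h|->].
  - apply/ffunP => i; have := h i; rewrite /I_le; case/orP => [/eqP//|].
    by rewrite (negbTE (hu i)).
  - by move=> i; rewrite /I_le eqxx.
by rewrite card1.
Qed.

End Face.

Section FaceS.
Variables (c : T -> bool) (y : T) (d : nat) (f : {ffun 'I_d.+1 -> 'I_3} -> T).
Hypotheses (fi : injective f) (fy : forall u, le (f u) y)
  (fs : forall z, le z y -> exists u, f u = z)
  (fle : forall u w, le (f u) (f w) = cube_le u w).
Hypothesis Hb : bicoloring le c.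

Lemma upd_inj u : injective (@upd d u).
Proof. by move=> k k' /ffunP /(_ ord0); rewrite !ffunE eqxx. Qed.

Lemma edge_f u : nos2 u -> is_edge le (f (upd u two3)).
Proof.
move=> /forallP hu; rewrite /is_edge /face_dim (card_ideal_f fi fy fs fle).
have/eq_card-> : [pred b | cube_le b (upd u two3)] =i image (upd u) predT.
  move=> b; rewrite !inE; apply/forallP/imageP => [h|[k _ ->] i].
  - exists (b ord0) => //; apply/ffunP => i; rewrite ffunE.
    case: (i =P ord0) => [->//|/eqP ne]; have := h i; rewrite /I_le ffunE (negbTE ne).
    by case/orP => [/eqP//|]; rewrite (negbTE (hu i)).
  - by rewrite /I_le !ffunE; case: (i == ord0); rewrite ?eqxx ?orbT.
by rewrite (card_image (@upd_inj u)) card_ord.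
Qed.

Lemma le_upd u k : le (f (upd u k)) (f (upd u two3)).
Proof. by rewrite fle; apply/forallP => i; rewrite /I_le !ffunE; case: (i == ord0); rewrite ?eqxx ?orbT. Qed.

Lemma color_flip u : nos2 u -> c (f (flipu u)) = ~~ c (f u).
Proof.
move=> hu.
have hu0 : val (u ord0) != 2 by move/forallP: hu => /(_ ord0).
have h1 : u = upd u (u ord0).
  by apply/ffunP => i; rewrite ffunE; case: (i =P ord0) => [->|].
have : c (f u) != c (f (flipu u)).
  apply: (Hb (edge_f hu)).
  - exact: vertex_f fi fy fs fle u hu.
  - by apply: (vertex_f fi fy fs fle); rewrite nos2_flip.
  - by rewrite {1}h1; apply: le_upd.
  - exact: le_upd.
  - apply/negP => /eqP /fi /ffunP /(_ ord0); rewrite /flipu ffunE eqxx => e.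
    by move: (flip0_neq hu0); rewrite -e eqxx.
by case: (c (f u)); case: (c (f (flipu u))).
Qed.


Lemma N_eq b : #|[pred v | (is_vertex le v && (c v == b)) && (le v y && (y != v))]|
  = #|[pred u | nos2 u && (c (f u) == b)]|.
Proof.
have fiy : ~~ is_vertex le y by rewrite /is_vertex (face_dim_spec fi fy fs).
rewrite -(card_image fi); apply: eq_card => v; rewrite !inE.
apply/idP/imageP.
- case/andP => [/andP[hv hc] /andP[hvy hne]].
  have [u hu] := fs hvy; subst v; exists u => //; rewrite inE hc andbT.
  apply/forallP => i; apply/negP => h2.
  pose u' := [ffun j => if j == i then ord0 else u j].
  have hle : le (f u') (f u).
    rewrite fle; apply/forallP => j; rewrite /I_le ffunE.
    by case: (j =P i) => [->|]; rewrite ?h2 ?orbT ?eqxx.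
  have := vertex_min hv hle.
  move=> /fi /ffunP /(_ i); rewrite ffunE eqxx => e.
  by move: h2; rewrite -e.
- case=> u; rewrite inE => /andP [hu hc] ->.
  rewrite hc (vertex_f fi fy fs fle hu) fy /=.
  by apply/negP => /eqP e; move: fiy; rewrite e (vertex_f fi fy fs fle hu).
Qed.

Lemma N_swap : #|[pred u | nos2 u && (c (f u) == true)]|
  = #|[pred u | nos2 u && (c (f u) == false)]|.
Proof.
have -> : #|[pred u | nos2 u && (c (f u) == false)]| = #|[set u | nos2 u && (c (f u) == false)]|
  by apply: eq_card => u; rewrite !inE.
rewrite -(card_preimset [set u | nos2 u && (c (f u) == false)] (can_inj (@flipuK d))).
apply: eq_card => u; rewrite !inE nos2_flip.
case hu: (nos2 u) => //=; by rewrite color_flip // ; case: (c (f u)).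
Qed.

End FaceS.

Lemma N_sym (c : T -> bool) (y : T) : bicoloring le c ->
  #|[pred v | (is_vertex le v && (c v == true)) && (le v y && (y != v))]|
  = #|[pred v | (is_vertex le v && (c v == false)) && (le v y && (y != v))]|.
Proof.
move=> Hb; case: Hc => _ /(_ y) [[|d] [f [fi fy fs fle]]].
  have H0 : forall v, le v y -> v = y.
    move=> v hv; have [u1 <-] := fs _ hv; have [u2 <-] := fs _ (le_refl' y).
    by congr f; apply/ffunP => -[].
  rewrite !eq_card0 // => v; rewrite !inE; apply/negP => /andP [_ /andP [/H0 -> ]];
    by rewrite eqxx.
by rewrite !(N_eq c fi fy fs fle) (N_swap fi fy fs fle Hb).
Qed.
End Cub.

Lemma sum_link (T : finType) (le : rel T) (c : T -> bool) (b : bool) :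
  (\sum_(v in [set v | is_vertex le v & c v == b]) link_euler le v =
   \sum_y (-1) ^+ (face_dim le y).-1 *+
      #|[pred v | (is_vertex le v && (c v == b)) && (le v y && (y != v))]|)%R.
Proof.
rewrite /link_euler.
under eq_bigr => v _ do rewrite big_mkcond.
rewrite exchange_big /=; apply: eq_bigr => y _.
rewrite -big_mkcondr.
rewrite -GRing.sumr_const.
apply: eq_bigl => v /=.
by rewrite in_set.
Qed.

Theorem theorem2p2 (T : finType) (le : rel T) (n : int) (c : T -> bool) :
  n != 0%R ->
  cubical_complex le ->
  eulerian le n ->
  bicoloring le c ->
  #|[set v | is_vertex le v & c v]| = #|[set v | is_vertex le v & ~~ c v]|.
Proof.
move=> nz [Hc _] He Hb.
have E b : (n *+ #|[set v | is_vertex le v & c v == b]| =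
   \sum_y (-1) ^+ (face_dim le y).-1 *+
      #|[pred v | (is_vertex le v && (c v == b)) && (le v y && (y != v))]|)%R.
  rewrite -sum_link -[LHS](GRing.sumr_const _ n) /=; apply: eq_bigr => v.
  by rewrite in_set => /andP [hv _]; rewrite He.

have E2 := E true.
have E3 : (n *+ #|[set v | is_vertex le v & c v == true]| = n *+ #|[set v | is_vertex le v & c v == false]|)%R.
  rewrite E2 E; apply: eq_bigr => y _; by rewrite (N_sym Hc y Hb).

have -> : [set v | is_vertex le v & c v] = [set v | is_vertex le v & c v == true].
  by apply/setP => v; rewrite !in_set eqb_id.
have -> : [set v | is_vertex le v & ~~ c v] = [set v | is_vertex le v & c v == false].
  by apply/setP => v; rewrite !in_set eqbF_neg.

move: E3; rewrite -[LHS]mulr_natr -[RHS]mulr_natr => /(mulfI nz) /eqP; rewrite eqr_nat => /eqP.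
done.
Qed.
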